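(* For every simple type $A$, the topological space $\widehat{\Lambda}(A)$ of profinite $\lambda$-terms of type $A$ is (homeomorphic to) the Stone dual space of the Boolean algebra $\mathrm{Reg}(A)$. In particular, $\mathrm{Reg}(A)$ is isomorphic to the Boolean algebra of clopen subsets of $\widehat{\Lambda}(A)$.
   Context: Simple types are generated from a base type $o$ by $\Rightarrow$; $\Lambda(A)$ is the set of closed simply typed $\lambda$-terms of type $A$ modulo $\beta\eta$. For a finite set $Q$: $[\![o]\!]_Q = Q$, $[\![A\Rightarrow B]\!]_Q$ = all functions $[\![A]\!]_Q \to [\![B]\!]_Q$, $[\![M]\!]_Q$ the standard interpretation, $D_Q(A) = \{[\![M]\!]_Q : M \in \Lambda(A)\}$. $\mathrm{Reg}_Q(A) = \{\{M : [\![M]\!]_Q \in F\} : F \subseteq [\![A]\!]_Q\}$ and $\mathrm{Reg}(A) = \bigcup_{Q\text{ finite}} \mathrm{Reg}_Q(A) \subseteq \wp(\Lambda(A))$, which is a Boolean algebra. Logical relations: for $R \subseteq Q\times Q'$, $[\![o]\!]_R = R$, $[\![A\Rightarrow B]\!]_R = \{(g,h) : \forall (x,y)\in[\![A]\!]_R,\ (g(x),h(y))\in[\![B]\!]_R\}$. A partial surjection $f \colon Q \twoheadrightarrow Q'$ is a relation that is the graph of a partial function surjective onto $Q'$. A profinite $\lambda$-term of type $A$ is a family $\theta=(\theta_Q)$, $Q$ ranging over finite sets, with $\theta_Q \in D_Q(A)$ and $(\theta_Q,\theta_{Q'}) \in [\![A]\!]_f$ for every partial surjection $f\colon Q\twoheadrightarrow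 Q'$. $\widehat{\Lambda}(A)$ is the set of these, with topology having basis $U_{Q,q} = \{\theta : \theta_Q = q\}$ for $Q$ finite and $q \in D_Q(A)$. *)

(* Defs.v *)
From mathcomp Require Import all_boot.
Set Implicit Arguments.
Unset Strict Implicit.
Unset Printing Implicit Defensive.

Inductive ty : Type := o : ty | arr : ty -> ty -> ty.

Inductive var : list ty -> ty -> Type :=
| vz : forall G A, var (cons A G) A
| vs : forall G A B, var G A -> var (cons B G) A.

Inductive tm : list ty -> ty -> Type :=
| Var : forall G A, var G A -> tm G A
| Lam : forall G A B, tm (cons A G) B -> tm G (arr A B)
| App : forall G A B, tm G (arr A B) -> tm G A -> tm G B.

Definition var_case (A : ty) (G : list ty) (P : ty -> Type)
  (z : P A) (s : forall B, var G B -> P B) : forall B, var (cons A G) B -> P B :=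
  fun B v =>
    match v in var G' B' return
      (match G' return Type with
       | nil => unit
       | cons A' G'' => P A' -> (forall C, var G'' C -> P C) -> P B'
       end) with
    | vz _ _ => fun z _ => z
    | vs _ _ _ v' => fun _ s => s _ v'
    end z s.

Definition var_nil (P : ty -> Type) : forall B, var nil B -> P B :=
  fun B v =>
    match v in var G' B' return
      (match G' return Type with nil => P B' | cons _ _ => unit end) with
    | vz _ _ => tt
    | vs _ _ _ _ => tt
    end.

Fixpoint ren (G : list ty) (A : ty) (t : tm G A) {struct t} :
  forall D, (forall B, var G B -> var D B) -> tm D A :=
  match t in tm G' A' return forall D, (forall B, var G' B -> var D B) -> tm D A' with
  | Var _ _ v => fun D r => Var (r _ v)
  | Lam G0 A0 B0 t0 => fun D r =>
      Lam (ren t0 (var_case (P := var (cons A0 D)) (vz D A0)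
                            (fun C v => vs A0 (r C v))))
  | App _ _ _ t1 t2 => fun D r => App (ren t1 r) (ren t2 r)
  end.

Fixpoint subst (G : list ty) (A : ty) (t : tm G A) {struct t} :
  forall D, (forall B, var G B -> tm D B) -> tm D A :=
  match t in tm G' A' return forall D, (forall B, var G' B -> tm D B) -> tm D A' with
  | Var _ _ v => fun D s => s _ v
  | Lam G0 A0 B0 t0 => fun D s =>
      Lam (subst t0 (var_case (P := tm (cons A0 D)) (Var (vz D A0))
                              (fun C v => ren (s C v) (fun E w => vs A0 w))))
  | App _ _ _ t1 t2 => fun D s => App (subst t1 s) (subst t2 s)
  end.

Definition subst1 (G : list ty) (A B : ty) (t : tm (cons A G) B) (u : tm G A) : tm G B :=
  subst t (var_case (P := tm G) u (fun C v => Var v)).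

Inductive conv : forall G A, tm G A -> tm G A -> Prop :=
| conv_beta : forall G A B (t : tm (cons A G) B) (u : tm G A),
    conv (App (Lam t) u) (subst1 t u)
| conv_eta : forall G A B (t : tm G (arr A B)),
    conv t (Lam (App (ren t (fun C v => vs A v)) (Var (vz G A))))
| conv_refl : forall G A (t : tm G A), conv t t
| conv_sym : forall G A (t u : tm G A), conv t u -> conv u t
| conv_trans : forall G A (t u v : tm G A), conv t u -> conv u v -> conv t v
| conv_lam : forall G A B (t t' : tm (cons A G) B), conv t t' -> conv (Lam t) (Lam t')
| conv_app : forall G A B (t t' : tm G (arr A B)) (u u' : tm G A),
    conv t t' -> conv u u' -> conv (App t u) (App t' u').

(* Lambda(A) = closed terms of type A modulo beta-eta.  A subset of Lambda(A)
   is represented by a predicate on closed terms saturated under conv. *)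
Definition cterm (A : ty) := tm nil A.
Definition saturated (A : ty) (S : cterm A -> Prop) : Prop :=
  forall M N : cterm A, conv M N -> S M -> S N.

Fixpoint sem (Q : finType) (A : ty) : Type :=
  match A with
  | o => Q
  | arr A B => sem Q A -> sem Q B
  end.

Fixpoint interp (Q : finType) (G : list ty) (A : ty) (t : tm G A) {struct t} :
  (forall B, var G B -> sem Q B) -> sem Q A :=
  match t in tm G' A' return (forall B, var G' B -> sem Q B) -> sem Q A' with
  | Var _ _ v => fun rho => rho _ v
  | Lam G0 A0 B0 t0 => fun rho =>
      fun x : sem Q A0 => interp t0 (var_case (P := sem Q) x rho)
  | App _ _ _ t1 t2 => fun rho => (interp t1 rho) (interp t2 rho)
  end.

Definition csem (Q : finType) (A : ty) (M : cterm A) : sem Q A :=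
  interp M (var_nil (sem Q)).

Definition inD (Q : finType) (A : ty) (d : sem Q A) : Prop :=
  exists M : cterm A, csem Q M = d.

Definition RegQ (Q : finType) (A : ty) (S : cterm A -> Prop) : Prop :=
  saturated S /\
  exists F : sem Q A -> Prop, forall M : cterm A, S M <-> F (csem Q M).
Definition Reg (A : ty) (S : cterm A -> Prop) : Prop :=
  exists Q : finType, RegQ Q S.

Fixpoint logrel (Q Q' : finType) (R : Q -> Q' -> Prop) (A : ty) :
  sem Q A -> sem Q' A -> Prop :=
  match A return sem Q A -> sem Q' A -> Prop with
  | o => R
  | arr A B => fun g h => forall x y, @logrel Q Q' R A x y -> @logrel Q Q' R B (g x) (h y)
  end.

Definition partial_surj (Q Q' : finType) (f : Q -> Q' -> Prop) : Prop :=
  (forall x y y', f x y -> f x y' -> y = y') /\ (forall y : Q', exists x : Q, f x y).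

Definition is_profinite (A : ty) (th : forall Q : finType, sem Q A) : Prop :=
  (forall Q : finType, inD (th Q)) /\
  (forall (Q Q' : finType) (f : Q -> Q' -> Prop),
      partial_surj f -> @logrel Q Q' f A (th Q) (th Q')).

Definition profinite (A : ty) :=
  { th : forall Q : finType, sem Q A | is_profinite th }.

Definition basicU (A : ty) (Q : finType) (q : sem Q A) : profinite A -> Prop :=
  fun th => proj1_sig th Q = q.

Definition prof_basis (A : ty) (U : profinite A -> Prop) : Prop :=
  exists (Q : finType) (q : sem Q A), inD q /\ (forall th, U th <-> basicU q th).

Fixpoint inl (T : Type) (x : T) (l : seq T) : Prop :=
  match l with nil => False | cons y l' => y = x \/ inl x l' end.

(* open sets of the topology generated by B (B used as a subbasis; when B
   is a basis this is exactly the topology with basis B) *)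
Definition gen_open (X : Type) (B : (X -> Prop) -> Prop) (U : X -> Prop) : Prop :=
  forall x, U x -> exists l : seq (X -> Prop),
    (forall b, inl b l -> B b) /\
    (forall b, inl b l -> b x) /\
    (forall y, (forall b, inl b l -> b y) -> U y).

Definition homeomorphic (X Y : Type) (BX : (X -> Prop) -> Prop)
  (BY : (Y -> Prop) -> Prop) : Prop :=
  exists (h : X -> Y) (g : Y -> X),
    (forall x, g (h x) = x) /\ (forall y, h (g y) = y) /\
    (forall V, gen_open BY V -> gen_open BX (fun x => V (h x))) /\
    (forall U, gen_open BX U -> gen_open BY (fun y => U (g y))).

Definition set_eq (T : Type) (S S' : T -> Prop) := forall x, S x <-> S' x.
Definition set_le (T : Type) (S S' : T -> Prop) := forall x, S x -> S' x.

Definition ultrafilter (A : ty) (U : (cterm A -> Prop) -> Prop) : Prop :=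
  (forall S, U S -> Reg S) /\
  (forall S S', U S -> set_eq S S' -> U S') /\
  U (fun _ => True) /\
  ~ U (fun _ => False) /\
  (forall S S', U S -> U S' -> U (fun M => S M /\ S' M)) /\
  (forall S S', U S -> Reg S' -> set_le S S' -> U S') /\
  (forall S, Reg S -> U S \/ U (fun M => ~ S M)).

Definition stone (A : ty) := { U : (cterm A -> Prop) -> Prop | ultrafilter U }.

Definition stone_basis (A : ty) (V : stone A -> Prop) : Prop :=
  exists S, Reg S /\ (forall U, V U <-> proj1_sig U S).

Definition prof_clopen (A : ty) (C : profinite A -> Prop) : Prop :=
  gen_open (@prof_basis A) C /\ gen_open (@prof_basis A) (fun th => ~ C th).

Definition reg_clopen_iso (A : ty) (phi : (cterm A -> Prop) -> (profinite A -> Prop)) : Prop :=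
  (forall S, Reg S -> prof_clopen (phi S)) /\
  (forall S S', Reg S -> Reg S' -> set_eq S S' -> set_eq (phi S) (phi S')) /\
  (forall S S', Reg S -> Reg S' -> set_eq (phi S) (phi S') -> set_eq S S') /\
  (forall C, prof_clopen C -> exists S, Reg S /\ set_eq (phi S) C) /\
  (forall S S', Reg S -> Reg S' ->
      set_eq (phi (fun M => S M /\ S' M)) (fun th => phi S th /\ phi S' th)) /\
  (forall S S', Reg S -> Reg S' ->
      set_eq (phi (fun M => S M \/ S' M)) (fun th => phi S th \/ phi S' th)) /\
  (forall S, Reg S -> set_eq (phi (fun M => ~ S M)) (fun th => ~ phi S th)) /\
  set_eq (phi (fun _ => True)) (fun _ => True) /\
  set_eq (phi (fun _ => False)) (fun _ => False).

(* Main.v *)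
Require Import Defs.
From mathcomp Require Import all_boot.
From Stdlib Require Import Classical ClassicalEpsilon FunctionalExtensionality PropExtensionality ProofIrrelevance.
Set Implicit Arguments.
Unset Strict Implicit.
Unset Printing Implicit Defensive.

Lemma var_cons_ind (A : ty) (G : list ty) (P : forall B, var (A :: G) B -> Prop) :
  P A (vz G A) -> (forall B (v : var G B), P B (vs A v)) -> forall B v, P B v.
Proof.
move=> Hz Hs B v.
refine (match v as v' in var G' B' return
  (match G' as G'' return var G'' B' -> Prop with
   | nil => fun _ => True
   | cons A' G0 => fun w => forall P' : (forall B, var (A' :: G0) B -> Prop),
        P' A' (vz G0 A') -> (forall B (w : var G0 B), P' B (vs A' w)) -> P' B' w
   end v') with
  | vz _ _ => fun P' hz hs => hz
  | vs _ _ _ w => fun P' hz hs => hs _ w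
  end P Hz Hs).
Qed.

Lemma var_nil_False B (v : var nil B) : False.
Proof.
exact (match v in var G' _ return (match G' with nil => False | _ => True end) with
  | vz _ _ => I | vs _ _ _ _ => I end).
Qed.

Lemma fund (Q Q' : finType) (R : Q -> Q' -> Prop) G A (t : tm G A) :
  forall rho rho', (forall B v, logrel R (rho B v) (rho' B v)) ->
  logrel R (interp t rho) (interp t rho').
Proof.
elim: t => {G A} [G A v | G A B t IH | G A B t1 IH1 t2 IH2] rho rho' H /=.
- exact: H.
- move=> x y Hxy; apply: IH.
  apply: (var_cons_ind (P := fun B v => logrel R (var_case x rho v) (var_case y rho' v))) => //=.
- exact: (IH1 _ _ H _ _ (IH2 _ _ H)).
Qed.

Lemma fundc (Q Q' : finType) (R : Q -> Q' -> Prop) A (M : cterm A) :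
  logrel R (csem Q M) (csem Q' M).
Proof. apply: fund => B v; case: (var_nil_False v). Qed.

Lemma interp_ext (Q : finType) G A (t : tm G A) : forall (rho rho' : forall B, var G B -> sem Q B),
  (forall B v, rho B v = rho' B v) -> interp t rho = interp t rho'.
Proof.
elim: t => {G A} [G A v | G A B t IH | G A B t1 IH1 t2 IH2] rho rho' H /=.
- exact: H.
- apply: functional_extensionality => x; apply: IH.
  apply: (var_cons_ind (P := fun B v => var_case x rho v = var_case x rho' v)) => //=.
- by rewrite (IH1 _ _ H) (IH2 _ _ H).
Qed.

Lemma interp_ren (Q : finType) G A (t : tm G A) : forall D (r : forall B, var G B -> var D B)
  (rho : forall B, var G B -> sem Q B) (rho' : forall B, var D B -> sem Q B),
  (forall B v, rho' B (r B v) = rho B v) -> interp (ren t r) rho' = interp t rho.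
Proof.
elim: t => {G A} [G A v | G A B t IH | G A B t1 IH1 t2 IH2] D r rho rho' H /=.
- exact: H.
- apply: functional_extensionality => x; apply: IH.
  apply: (var_cons_ind (P := fun B v => var_case x rho' (var_case (P := var (A :: D)) (vz D A) (fun C v => vs A (r C v)) v) = var_case x rho v)) => //=.
- by rewrite (IH1 _ _ _ _ H) (IH2 _ _ _ _ H).
Qed.

Lemma interp_subst (Q : finType) G A (t : tm G A) : forall D (s : forall B, var G B -> tm D B)
  (rho : forall B, var G B -> sem Q B) (rho' : forall B, var D B -> sem Q B),
  (forall B v, interp (s B v) rho' = rho B v) -> interp (subst t s) rho' = interp t rho.
Proof.
elim: t => {G A} [G A v | G A B t IH | G A B t1 IH1 t2 IH2] D s rho rho' H /=.
- exact: H.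
- apply: functional_extensionality => x; apply: IH.
  apply: (var_cons_ind (P := fun B v => interp (var_case (P := tm (A :: D)) (Var (vz D A)) (fun C v => ren (s C v) (fun E w => vs A w)) v) (var_case x rho') = var_case x rho v)) => //=.
  move=> B1 v; rewrite -H; apply: interp_ren => //.
- by rewrite (IH1 _ _ _ _ H) (IH2 _ _ _ _ H).
Qed.

Lemma interp_conv (Q : finType) G A (t u : tm G A) : conv t u ->
  forall rho : forall B, var G B -> sem Q B, interp t rho = interp u rho.
Proof.
elim => {G A t u}.
- move=> G A B t u rho /=; symmetry; apply: interp_subst.
  by apply: (var_cons_ind (P := fun B' v => interp (var_case (P := tm G) u (fun C v => Var v) v) rho = var_case (interp u rho) rho v)).
- move=> G A B t rho /=; apply: functional_extensionality => x.
  by rewrite (@interp_ren Q G _ t _ _ rho).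
- by [].
- by move=> G A t u _ IH rho; rewrite IH.
- by move=> G A t u v _ IH1 _ IH2 rho; rewrite IH1 IH2.
- move=> G A B t t' _ IH rho /=; apply: functional_extensionality => x; exact: IH.
- by move=> G A B t t' u u' _ IH1 _ IH2 rho /=; rewrite IH1 IH2.
Qed.

Lemma csem_conv (Q : finType) A (M N : cterm A) : conv M N -> csem Q M = csem Q N.
Proof. move=> H; exact: interp_conv. Qed.
Fixpoint sem_inh (Q : finType) (q0 : Q) A : sem Q A :=
  match A with o => q0 | arr A B => fun _ => sem_inh q0 B end.

Lemma lift (Q Q' : finType) (f : Q -> Q' -> Prop) (q0 : Q) : partial_surj f -> forall A,
  (forall (x : sem Q A) y y', logrel f x y -> logrel f x y' -> y = y') /\
  (forall y : sem Q' A, exists x : sem Q A, logrel f x y).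
Proof.
move=> [Hf Hs]; elim => [|A [fA sA] B [fB sB]] /=; first by split.
split.
- move=> g h h' H1 H2; apply: functional_extensionality => y.
  case: (sA y) => x Hx; exact: fB _ _ _ (H1 _ _ Hx) (H2 _ _ Hx).
- move=> h.
  exists (fun x => match excluded_middle_informative (exists y, logrel f x y) with
    | left H => proj1_sig (constructive_indefinite_description _
                   (sB (h (proj1_sig (constructive_indefinite_description _ H)))))
    | right _ => sem_inh q0 B end).
  move=> x y Hxy. case: excluded_middle_informative => [H|H]; last by case: H; exists y.
  destruct (constructive_indefinite_description _ H) as [y' Hy'] => /=.
  destruct (constructive_indefinite_description _ _) as [x' Hx'] => /=.
  by rewrite (fA _ _ _ Hxy Hy').
Qed.

Lemma det (P Q : finType) (f : P -> Q -> Prop) (p0 : P) : partial_surj f ->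
  forall A (M N : cterm A), csem P M = csem P N -> csem Q M = csem Q N.
Proof.
move=> Hf A M N E; have [fn _] := lift p0 Hf A.
apply: (fn _ _ _ (fundc f M)); rewrite E; exact: fundc.
Qed.

Lemma transfer A (th : forall Q : finType, sem Q A) (P Q : finType) (f : P -> Q -> Prop) (p0 : P) :
  is_profinite th -> partial_surj f -> forall N, th P = csem P N -> th Q = csem Q N.
Proof.
move=> [_ Hth] Hf N E; have [fn _] := lift p0 Hf A.
apply: (fn _ _ _ (Hth _ _ _ Hf)); rewrite E; exact: fundc.
Qed.

Definition Pq (Q Q' : finType) : finType := option (Q + Q')%type.
Definition fl (Q Q' : finType) : Pq Q Q' -> Q -> Prop := fun p q => p = Some (Datatypes.inl q).
Definition fr (Q Q' : finType) : Pq Q Q' -> Q' -> Prop := fun p q => p = Some (Datatypes.inr q).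
Lemma fl_ps Q Q' : partial_surj (@fl Q Q').
Proof. split; first by move=> x y y' -> [] ->. by move=> y; exists (Some (Datatypes.inl y)). Qed.
Lemma fr_ps Q Q' : partial_surj (@fr Q Q').
Proof. split; first by move=> x y y' -> [] ->. by move=> y; exists (Some (Datatypes.inr y)). Qed.
Definition p0 (Q Q' : finType) : Pq Q Q' := None.

Lemma prof_pair A (th : forall Q : finType, sem Q A) : is_profinite th ->
  forall Q Q' : finType, exists M, th Q = csem Q M /\ th Q' = csem Q' M.
Proof.
move=> Hth Q Q'; have [M HM] := proj1 Hth (Pq Q Q').
exists M; split.
- exact: (transfer (p0 Q Q') Hth (@fl_ps Q Q')).
- exact: (transfer (p0 Q Q') Hth (@fr_ps Q Q')).
Qed.

Definition Qm (m : nat) : finType := 'I_m.+1.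
Definition rk (Q : finType) (m : nat) : Qm m -> Q -> Prop :=
  fun i q => nat_of_ord i = nat_of_ord (enum_rank q).
Lemma rk_ps (Q : finType) m : #|Q| <= m.+1 -> partial_surj (@rk Q m).
Proof.
move=> Hm; split.
- move=> i q q'; rewrite /rk => -> E; apply: enum_rank_inj; exact: ord_inj.
- move=> q; exists (inord (enum_rank q)); rewrite /rk inordK //.
  exact: leq_trans (ltn_ord _) Hm.
Qed.
Definition q0m m : Qm m := ord0.
Lemma sem_fin (Q : finType) A : exists (T : finType) (s : T -> sem Q A), forall x, exists t, s t = x.
Proof.
elim: A => [|A [TA [sA HA]] B [TB [sB HB]]] /=.
- by exists Q, id => x; exists x.
- pose rA x := proj1_sig (constructive_indefinite_description _ (HA x)).
  pose rB x := proj1_sig (constructive_indefinite_description _ (HB x)).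
  have rAK x : sA (rA x) = x by rewrite /rA; case: constructive_indefinite_description.
  have rBK x : sB (rB x) = x by rewrite /rB; case: constructive_indefinite_description.
  exists {ffun TA -> TB}, (fun (phi : {ffun TA -> TB}) x => sB (phi (rA x))) => k.
  exists [ffun t => rB (k (sA t))]; apply: functional_extensionality => x.
  by rewrite ffunE rBK rAK.
Qed.

Lemma Reg_sat A (S : cterm A -> Prop) : Reg S -> saturated S.
Proof. by case=> Q []. Qed.

Lemma Reg_seteq A (S S' : cterm A -> Prop) : Reg S -> set_eq S S' -> Reg S'.
Proof.
move=> [Q [Hs [F HF]]] E; exists Q; split.
- move=> M N c /E H; apply/E; exact: Hs c H.
- exists F => M; rewrite -E; exact: HF.
Qed.

Lemma Reg_Sq A (Q : finType) (q : sem Q A) : Reg (fun M => csem Q M = q).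
Proof.
exists Q; split; last by exists (fun d => d = q).
by move=> M N c <-; symmetry; apply: csem_conv.
Qed.

Lemma Reg_not A (S : cterm A -> Prop) : Reg S -> Reg (fun M => ~ S M).
Proof.
move=> [Q [Hs [F HF]]]; exists Q; split.
- move=> M N c H1 H2; apply: H1; apply: Hs H2; exact: conv_sym.
- by exists (fun d => ~ F d) => M; rewrite HF.
Qed.

Lemma Reg_True A : Reg (fun _ : cterm A => True).
Proof. exists bool; split => //; by exists (fun _ => True). Qed.
Lemma Reg_False A : Reg (fun _ : cterm A => False).
Proof. exists bool; split => //; by exists (fun _ => False). Qed.

Lemma Reg_bin A (op : Prop -> Prop -> Prop) (S S' : cterm A -> Prop) : Reg S -> Reg S' ->
  saturated (fun M => op (S M) (S' M)) -> Reg (fun M => op (S M) (S' M)).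
Proof.
move=> [Q [Hs [F HF]]] [Q' [Hs' [F' HF']]] Hsat; exists (Pq Q Q'); split => //.
exists (fun d => exists N, d = csem (Pq Q Q') N /\ op (S N) (S' N)) => K; split.
- by move=> H; exists K.
- move=> [N [E H]].
  have E1 := det (p0 Q Q') (@fl_ps Q Q') E.
  have E2 := det (p0 Q Q') (@fr_ps Q Q') E.
  have -> : S K = S N by apply: propositional_extensionality; rewrite !HF E1.
  have -> : S' K = S' N by apply: propositional_extensionality; rewrite !HF' E2.
  exact: H.
Qed.

Lemma Reg_and A (S S' : cterm A -> Prop) : Reg S -> Reg S' -> Reg (fun M => S M /\ S' M).
Proof.
move=> H H'; apply: Reg_bin => // M N c [a b]; split.
- exact: Reg_sat H _ _ c a.
- exact: Reg_sat H' _ _ c b.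
Qed.

Lemma Reg_or A (S S' : cterm A -> Prop) : Reg S -> Reg S' -> Reg (fun M => S M \/ S' M).
Proof.
move=> H H'; apply: Reg_bin => // M N c [a|b].
- left; exact: Reg_sat H _ _ c a.
- right; exact: Reg_sat H' _ _ c b.
Qed.

Definition ufof A (th : forall Q : finType, sem Q A) (S : cterm A -> Prop) : Prop :=
  saturated S /\ exists (Q : finType) (F : sem Q A -> Prop),
    (forall M, S M <-> F (csem Q M)) /\ F (th Q).

Lemma ufof_iff A (th : forall Q : finType, sem Q A) (S : cterm A -> Prop) (Q : finType) (F : sem Q A -> Prop) :
  is_profinite th -> saturated S -> (forall M, S M <-> F (csem Q M)) -> (ufof th S <-> F (th Q)).
Proof.
move=> Hth Hs HF; split; last by move=> H; split => //; exists Q, F.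
move=> [_ [Q1 [F1 [HF1 H1]]]].
have [M [E E1]] := prof_pair Hth Q Q1.
rewrite E -HF HF1 -E1 //.
Qed.

Lemma ufof_Reg A (th : forall Q : finType, sem Q A) S : ufof th S -> Reg S.
Proof. move=> [Hs [Q [F [HF _]]]]; exists Q; split => //; by exists F. Qed.

Lemma ufof_ultra A (th : forall Q : finType, sem Q A) : is_profinite th -> ultrafilter (ufof th).
Proof.
move=> Hth.
have key S : Reg S -> (ufof th S <-> exists Q (F : sem Q A -> Prop), (forall M, S M <-> F (csem Q M)) /\ F (th Q)).
  move=> [Q [Hs [F HF]]]; split; first by case.
  by move=> H; split.
split; first exact: ufof_Reg.
split.
  move=> S S' H E; have HR' := Reg_seteq (ufof_Reg H) E.
  apply/(key _ HR'); move: H => [_ [Q [F [HF HQ]]]]; exists Q, F; split => // M.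
  by rewrite -E.
split; first by apply/(key _ (Reg_True A)); exists bool, (fun _ => True).
split.
  move=> [_ [Q [F [HF HQ]]]]; have [M HM] := proj1 Hth Q.
  by rewrite -HM -HF in HQ.
split.
  move=> S S' H H'; have HR := Reg_and (ufof_Reg H) (ufof_Reg H').
  move: H H' => [Hs [Q [F [HF HQ]]]] [Hs' [Q' [F' [HF' HQ']]]].
  apply/(ufof_iff (Q := Pq Q Q') (F := fun d => exists N, d = csem (Pq Q Q') N /\ S N /\ S' N) Hth (Reg_sat HR)).
  + move=> K; split; first by move=> H; exists K.
    move=> [N [E [a b]]].
    have E1 := det (p0 Q Q') (@fl_ps Q Q') E.
    have E2 := det (p0 Q Q') (@fr_ps Q Q') E.
    by rewrite HF HF' E1 E2 -HF -HF'.
  + have [N HN] := proj1 Hth (Pq Q Q'); exists N; split; first by rewrite HN.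
    rewrite HF HF'.
    rewrite -(transfer (p0 Q Q') Hth (@fl_ps Q Q') (esym HN)).
    by rewrite -(transfer (p0 Q Q') Hth (@fr_ps Q Q') (esym HN)).
split.
  move=> S S' [Hs [Q [F [HF HQ]]]] HR' Hle.
  case: (HR') => Q' [Hs' [F' HF']].
  apply/(ufof_iff Hth Hs' HF').
  have [M [E E']] := prof_pair Hth Q Q'.
  by rewrite E' -HF'; apply: Hle; rewrite HF -E.
move=> S HR; case: (HR) => Q [Hs [F HF]].
have HRn := Reg_not HR.
case: (classic (F (th Q))) => H.
- left; apply/(ufof_iff Hth Hs HF) => //.
- right; apply/(ufof_iff (F := fun d => ~ F d) Hth (Reg_sat HRn)) => // M.
  by rewrite HF.
Qed.
Lemma uf_ne A (U : (cterm A -> Prop) -> Prop) X : ultrafilter U -> U X -> exists M, X M.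
Proof.
move=> [_ [Hseq [_ [HF _]]]] H; apply: NNPP => Hn; apply: HF; refine (Hseq _ _ H _) => M.
split => // HM; apply: Hn; by exists M.
Qed.

Lemma exists_q A (U : (cterm A -> Prop) -> Prop) (Q : finType) : ultrafilter U ->
  exists q : sem Q A, U (fun M => csem Q M = q).
Proof.
move=> HU; apply: NNPP => Hn.
case: (HU) => [_ [Hseq [HT [HF [Hmeet [_ Hcomp]]]]]].
have Hc q : U (fun M => ~ csem Q M = q).
  case: (Hcomp _ (Reg_Sq q)) => // H; case: Hn; by exists q.
have [T [s Hs]] := sem_fin Q A.
have Hl : forall l : seq T, U (fun M => forall t, t \in l -> csem Q M <> s t).
  elim => [|t l IH].
  - by refine (Hseq _ _ HT _) => M; split.
  - refine (Hseq _ _ (Hmeet _ _ (Hc (s t)) IH) _) => M; split.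
    + move=> [H1 H2] t'; rewrite in_cons => /orP [/eqP -> //|]; exact: H2.
    + move=> H; split; first by apply: H; rewrite in_cons eqxx.
      by move=> t' Ht'; apply: H; rewrite in_cons Ht' orbT.
apply: HF; refine (Hseq _ _ (Hl (enum T)) _) => M; split => // H.
have [t Ht] := Hs (csem Q M); apply: (H t) => //; by rewrite mem_enum.
Qed.

Lemma q_uniq A (U : (cterm A -> Prop) -> Prop) (Q : finType) (q q' : sem Q A) : ultrafilter U ->
  U (fun M => csem Q M = q) -> U (fun M => csem Q M = q') -> q = q'.
Proof.
move=> HU H H'; have HU' := HU; case: HU' => [_ [_ [_ [_ [Hmeet _]]]]].
have [M [<- <-]] := uf_ne HU (Hmeet _ _ H H'); done.
Qed.

Definition thof A (U : stone A) (Q : finType) : sem Q A :=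
  proj1_sig (constructive_indefinite_description _ (exists_q Q (proj2_sig U))).

Lemma thof_spec A (U : stone A) Q : proj1_sig U (fun M => csem Q M = thof U Q).
Proof. rewrite /thof; by case: constructive_indefinite_description. Qed.

Lemma thof_eq A (U : stone A) Q q : proj1_sig U (fun M => csem Q M = q) -> thof U Q = q.
Proof. move=> H; apply: (q_uniq (proj2_sig U) (thof_spec U Q) H). Qed.

Lemma thof_prof A (U : stone A) : is_profinite (thof U).
Proof.
have HU := proj2_sig U; split.
- move=> Q; have [M HM] := uf_ne HU (thof_spec U Q); by exists M.
- move=> Q Q' f _; case: (HU) => [_ [_ [_ [_ [Hmeet _]]]]].
  have [M [<- <-]] := uf_ne HU (Hmeet _ _ (thof_spec U Q) (thof_spec U Q')).
  exact: fundc.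
Qed.

Definition hmap A (th : profinite A) : stone A :=
  exist _ (ufof (proj1_sig th)) (ufof_ultra (proj2_sig th)).
Definition gmap A (U : stone A) : profinite A := exist _ (thof U) (thof_prof U).

Lemma sig_eq (T : Type) (P : T -> Prop) (x y : {t | P t}) : proj1_sig x = proj1_sig y -> x = y.
Proof.
case: x => x px; case: y => y py /= E; subst y; f_equal; apply: proof_irrelevance.
Qed.

Lemma gh A (th : profinite A) : gmap (hmap th) = th.
Proof.
apply: sig_eq => /=; apply: functional_extensionality_dep => Q.
apply: thof_eq => /=.
apply/(ufof_iff (F := fun d => d = proj1_sig th Q) (proj2_sig th)) => //.
exact: (Reg_sat (Reg_Sq _)).
Qed.

Lemma hg A (U : stone A) : hmap (gmap U) = U.
Proof.
apply: sig_eq => /=; apply: functional_extensionality => S.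
apply: propositional_extensionality.
have HU := proj2_sig U; case: (HU) => [HReg [_ [_ [_ [Hmeet [Hup _]]]]]].
split.
- move=> H; have HR := ufof_Reg H; move: H => [Hs [Q [F [HF HQ]]]].
  apply: (Hup _ _ (thof_spec U Q) HR) => M E; by rewrite HF E.
- move=> H; case: (HReg _ H) => Q [Hs [F HF]].
  apply/(ufof_iff (thof_prof U) Hs HF).
  have [M [H1 H2]] := uf_ne HU (Hmeet _ _ H (thof_spec U Q)).
  by rewrite -H2 -HF.
Qed.

Lemma inl_cat T (b : T) l1 l2 : inl b (l1 ++ l2) <-> inl b l1 \/ inl b l2.
Proof.
elim: l1 => [|a l IH] /=; first by split; [right|case].
rewrite IH; tauto.
Qed.

Lemma gen_open_ext X (B : (X -> Prop) -> Prop) (U U' : X -> Prop) :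
  (forall x, U x <-> U' x) -> gen_open B U -> gen_open B U'.
Proof.
move=> E H x /E Ux; have [l [l1 [l2 l3]]] := H x Ux.
exists l; split => //; split => // y Hy; apply/E; exact: l3.
Qed.

Lemma cont X Y (BX : (X -> Prop) -> Prop) (BY : (Y -> Prop) -> Prop) (h : X -> Y) :
  (forall b, BY b -> gen_open BX (fun x => b (h x))) ->
  forall V, gen_open BY V -> gen_open BX (fun x => V (h x)).
Proof.
move=> Hb V HV x Vx; case: (HV _ Vx) => l [L1 [L2 L3]].
suff [l' [H1 [H2 H3]]] : exists l', (forall b, inl b l' -> BX b) /\ (forall b, inl b l' -> b x) /\
   (forall y, (forall b, inl b l' -> b y) -> forall b, inl b l -> b (h y)).
  exists l'; split => //; split => // y Hy; apply: L3; exact: H3.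
move: L1 L2 {L3}; elim: l => [|b l IH] /= L1 L2.
- by exists [::].
- have [la [a1 [a2 a3]]] := Hb b (L1 b (or_introl erefl)) x (L2 b (or_introl erefl)).
  have [lb [b1 [b2 b3]]] := IH (fun b' H => L1 b' (or_intror H)) (fun b' H => L2 b' (or_intror H)).
  exists (la ++ lb); split; [|split].
  + by move=> b' /inl_cat [] ?; [apply: a1|apply: b1].
  + by move=> b' /inl_cat [] ?; [apply: a2|apply: b2].
  + move=> y Hy b' [<-|H].
    * apply: a3 => b'' H''; apply: Hy; apply/inl_cat; by left.
    * apply: (b3 y) => // b'' H''; apply: Hy; apply/inl_cat; by right.
Qed.

Lemma open_phi A (S : cterm A -> Prop) : gen_open (@prof_basis A) (fun th => ufof (proj1_sig th) S).
Proof.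
move=> th [Hs [Q [F [HF HQ]]]].
exists [:: basicU (proj1_sig th Q)]; split; [|split].
- move=> b [<-|[]]; exists Q, (proj1_sig th Q); split => //; exact: (proj1 (proj2_sig th) Q).
- by move=> b [<-|[]].
- move=> y Hy; have E : proj1_sig y Q = proj1_sig th Q by apply: (Hy _ (or_introl erefl)).
  split => //; exists Q, F; split => //; by rewrite E.
Qed.

Lemma homeo A : homeomorphic (@prof_basis A) (@stone_basis A).
Proof.
exists (@hmap A), (@gmap A); split; first exact: gh.
split; first exact: hg.
split.
- apply: cont => b [S [HR Hb]].
  refine (gen_open_ext _ (@open_phi A S)) => th; by rewrite Hb.
- apply: cont => b [Q [q [Hq Hb]]] U HbU.
  have E : thof U Q = q by move/Hb: HbU.
  exists [:: fun U' : stone A => proj1_sig U' (fun M => csem Q M = q)]; split; [|split].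
  + move=> b' [<-|[]]; exists (fun M => csem Q M = q); split => //; exact: Reg_Sq.
  + move=> b' [<-|[]]; rewrite -E; exact: thof_spec.
  + move=> y Hy; apply/Hb; rewrite /basicU /=; apply: thof_eq; exact: (Hy _ (or_introl erefl)).
Qed.
Lemma agree A (th th' : forall Q : finType, sem Q A) (P Q : finType) (f : P -> Q -> Prop) (p : P) :
  is_profinite th -> is_profinite th' -> partial_surj f -> th P = th' P -> th Q = th' Q.
Proof.
move=> H H' Hf E; have [N HN] := proj1 H P.
rewrite (transfer p H Hf (esym HN)) (transfer p H' Hf (esym (etrans HN E))) //.
Qed.

Lemma agree_Q A (th th' : profinite A) (Q : finType) k : #|Q| <= k.+1 ->
  proj1_sig th (Qm k) = proj1_sig th' (Qm k) -> proj1_sig th Q = proj1_sig th' Q.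
Proof.
move=> Hk; apply: (agree (q0m k) (proj2_sig th) (proj2_sig th') (rk_ps Hk)).
Qed.

Lemma card_Qm m : #|Qm m| = m.+1.
Proof. exact: card_ord. Qed.

Lemma agree_m A (th th' : profinite A) m n : m <= n ->
  proj1_sig th (Qm n) = proj1_sig th' (Qm n) -> proj1_sig th (Qm m) = proj1_sig th' (Qm m).
Proof. move=> H; apply: agree_Q; by rewrite card_Qm. Qed.

Lemma open_det A (X : profinite A -> Prop) (th : profinite A) : gen_open (@prof_basis A) X -> X th ->
  exists k, forall th' : profinite A, proj1_sig th' (Qm k) = proj1_sig th (Qm k) -> X th'.
Proof.
move=> HX Xth; have [l [L1 [L2 L3]]] := HX th Xth.
suff [k Hk] : exists k, forall th' : profinite A, proj1_sig th' (Qm k) = proj1_sig th (Qm k) -> forall b, inl b l -> b th'.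
  exists k => th' E; apply: L3; exact: Hk.
move: L1 L2 {L3}; elim: l => [|b l IH] /= L1 L2; first by exists 0.
have [k2 Hk2] := IH (fun b' H => L1 b' (or_intror H)) (fun b' H => L2 b' (or_intror H)).
have [Q [q [_ Hb]]] := L1 b (or_introl erefl).
have bth := L2 b (or_introl erefl).
exists (maxn #|Q| k2) => th' E b' [<-|H].
- apply/Hb; move/Hb: bth; rewrite /basicU => <-.
  apply: (agree_Q (k := maxn #|Q| k2)) => //; exact: leq_trans (leq_maxl _ _) (leqnSn _).
- apply: Hk2 => //; apply: (agree_m _ E); exact: leq_maxr.
Qed.

Lemma sem_Q0 A (x y : sem (Qm 0) A) : x = y.
Proof.
elim: A x y => [|A _ B IH] /= x y.
- by rewrite [x]ord1 [y]ord1.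
- apply: functional_extensionality => z; exact: IH.
Qed.

Lemma dep_choice (X : Type) (P : nat -> X -> Prop) (R : nat -> X -> X -> Prop) (x0 : X) :
  P 0 x0 -> (forall m x, P m x -> exists y, P m.+1 y /\ R m x y) ->
  exists f : nat -> X, forall m, P m (f m) /\ R m (f m) (f m.+1).
Proof.
move=> H0 Hs.
pose step m (p : {x | P m x}) : {y | P m.+1 y} :=
  let c := constructive_indefinite_description _ (Hs m _ (proj2_sig p)) in
  exist _ (proj1_sig c) (proj1 (proj2_sig c)).
have stepR m p : R m (proj1_sig p) (proj1_sig (step m p)).
  rewrite /step /=; case: constructive_indefinite_description => y [] //.
pose F := fix F (m : nat) : {x | P m x} :=
  match m return {x | P m x} with 0 => exist _ x0 H0 | m'.+1 => step m' (F m') end.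
exists (fun m => proj1_sig (F m)) => m; split; first exact: proj2_sig.
exact: stepR.
Qed.
Definition bad A (C : profinite A -> Prop) m (N : cterm A) : Prop :=
  exists th th' : profinite A, proj1_sig th (Qm m) = csem (Qm m) N /\
    proj1_sig th' (Qm m) = csem (Qm m) N /\ C th /\ ~ C th'.

Lemma transfer_m A (th : profinite A) m n N : m <= n ->
  proj1_sig th (Qm n) = csem (Qm n) N -> proj1_sig th (Qm m) = csem (Qm m) N.
Proof.
move=> H; apply: (transfer (q0m n) (proj2_sig th) (rk_ps (Q := Qm m) _)); by rewrite card_Qm.
Qed.

Lemma det_m A m n (M N : cterm A) : m <= n -> csem (Qm n) M = csem (Qm n) N -> csem (Qm m) M = csem (Qm m) N.
Proof. move=> H; apply: (det (q0m n) (rk_ps (Q := Qm m) _)); by rewrite card_Qm. Qed.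

Lemma bad_mono A C m n (N : cterm A) : m <= n -> bad C n N -> bad C m N.
Proof.
move=> H [th [th' [E [E' [c c']]]]]; exists th, th'; split; [|split] => //.
- exact: transfer_m H E.
- exact: transfer_m H E'.
Qed.

Definition IB A (C : profinite A -> Prop) m (N : cterm A) : Prop :=
  forall n, m <= n -> exists N', bad C n N' /\ csem (Qm m) N' = csem (Qm m) N.

Lemma IB_step A C m (N : cterm A) : IB C m N ->
  exists N', IB C m.+1 N' /\ csem (Qm m) N' = csem (Qm m) N.
Proof.
move=> HI; apply: NNPP => Hn.
have [T [s Hs]] := sem_fin (Qm m.+1) A.
pose Pt t n := exists N', bad C n N' /\ csem (Qm m.+1) N' = s t /\ csem (Qm m) N' = csem (Qm m) N.
have C1 t : exists n, m.+1 <= n /\ ~ Pt t n.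
  apply: NNPP => H.
  have All n : m.+1 <= n -> Pt t n.
    move=> Hmn; apply: NNPP => HP; apply: H; by exists n.
  have [N' [b1 [e1 e2]]] := All _ (leqnn _).
  apply: Hn; exists N'; split => // n Hmn.
  have [N'' [b2 [e3 e4]]] := All _ Hmn.
  by exists N''; split => //; rewrite e1 e3.
have C2 t n n' : m.+1 <= n -> n <= n' -> ~ Pt t n -> ~ Pt t n'.
  move=> h1 h2 HP [N' [b [e1 e2]]]; apply: HP; exists N'; split => //.
  exact: bad_mono h2 b.
have C3 : forall l : seq T, exists n, m.+1 <= n /\ forall t, t \in l -> ~ Pt t n.
  elim => [|t l [n2 [h2 H2]]]; first by exists m.+1.
  have [n1 [h1 H1]] := C1 t.
  exists (maxn n1 n2); split; first exact: leq_trans h1 (leq_maxl _ _).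
  move=> t'; rewrite in_cons => /orP [/eqP ->|Ht'].
  + exact: C2 h1 (leq_maxl _ _) H1.
  + exact: C2 h2 (leq_maxr _ _) (H2 _ Ht').
have [n [hn Hn2]] := C3 (enum T).
have [N'' [b e]] := HI n (ltnW hn).
have [t Ht] := Hs (csem (Qm m.+1) N'').
apply: (Hn2 t); first by rewrite mem_enum.
exists N''; split => //.
Qed.

Lemma clopen_det A (C : profinite A -> Prop) : prof_clopen C ->
  exists m, forall th th' : profinite A, proj1_sig th (Qm m) = proj1_sig th' (Qm m) -> C th -> C th'.
Proof.
move=> [HC HnC]; apply: NNPP => Hn.
have Hbad m : exists N, bad C m N.
  apply: NNPP => Hb; apply: Hn; exists m => th th' E c; apply: NNPP => c'.
  have [N HN] := proj1 (proj2_sig th) (Qm m).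
  apply: Hb; exists N, th, th'; split; [|split] => //; by rewrite -E.
have [N0 _] := Hbad 0.
have IB0 : IB C 0 N0.
  move=> n _; have [N HN] := Hbad n; exists N; split => //; exact: sem_Q0.
have [Ns HNs] := dep_choice (P := IB C) (R := fun m x y => csem (Qm m) y = csem (Qm m) x) IB0
  (fun m x H => IB_step H).
have coh m k : csem (Qm m) (Ns (m + k)) = csem (Qm m) (Ns m).
  elim: k => [|k IH]; first by rewrite addn0.
  rewrite addnS -IH; apply: (det_m (n := m + k)); first exact: leq_addr.
  exact: (proj2 (HNs _)).
have cyl m n N : m <= n -> csem (Qm n) N = csem (Qm n) (Ns n) -> csem (Qm m) N = csem (Qm m) (Ns m).
  move=> H E; rewrite -(subnKC H) in E *; rewrite -(coh m (n - m)).
  exact: det_m (leq_addr _ _) E.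
pose Ubr (S : cterm A -> Prop) := Reg S /\ exists m, forall N, csem (Qm m) N = csem (Qm m) (Ns m) -> S N.
have HU : ultrafilter Ubr.
  split; first by move=> S [].
  split.
    move=> S S' [HR [m Hm]] E; split; first exact: Reg_seteq HR E.
    by exists m => N /Hm /E.
  split; first by split; [exact: Reg_True|exists 0].
  split; first by move=> [_ [m Hm]]; exact: (Hm (Ns m)).
  split.
    move=> S S' [HR [m Hm]] [HR' [m' Hm']]; split; first exact: Reg_and.
    exists (maxn m m') => N E; split.
    - apply: Hm; exact: cyl (leq_maxl _ _) E.
    - apply: Hm'; exact: cyl (leq_maxr _ _) E.
  split.
    move=> S S' [HR [m Hm]] HR' Hle; split => //; exists m => N E; apply: Hle; exact: Hm.
  move=> S HR; case: (HR) => Q [Hs [F HF]].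
  have D N : csem (Qm #|Q|) N = csem (Qm #|Q|) (Ns #|Q|) -> csem Q N = csem Q (Ns #|Q|).
    apply: (det (q0m #|Q|) (rk_ps (Q := Q) (leqnSn _))).
  case: (classic (S (Ns #|Q|))) => H.
  - left; split => //; exists #|Q| => N /D E; by rewrite HF E -HF.
  - right; split; first exact: Reg_not.
    exists #|Q| => N /D E; by rewrite HF E -HF.
pose th := gmap (exist _ Ubr HU).
have Hth m : proj1_sig th (Qm m) = csem (Qm m) (Ns m).
  apply: thof_eq => /=; split; first exact: Reg_Sq.
  by exists m.
have badk k : bad C k (Ns k).
  have [N' [[t1 [t2 [e1 [e2 c]]]] e]] := proj1 (HNs k) k (leqnn _).
  exists t1, t2; by rewrite -e.
case: (classic (C th)) => c.
- have [k Hk] := open_det HC c.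
  have [t1 [t2 [e1 [e2 [c1 c2]]]]] := badk k.
  apply: c2; apply: Hk; by rewrite e2 Hth.
- have [k Hk] := open_det HnC c.
  have [t1 [t2 [e1 [e2 [c1 c2]]]]] := badk k.
  apply: (Hk t1) => //; by rewrite e1 Hth.
Qed.
Definition phi A (S : cterm A -> Prop) : profinite A -> Prop := fun th => ufof (proj1_sig th) S.

Lemma prin_prof A (M : cterm A) : is_profinite (fun Q : finType => csem Q M).
Proof. split; [move=> Q; by exists M | move=> Q Q' f _; exact: fundc]. Qed.
Definition prin A (M : cterm A) : profinite A := exist _ _ (prin_prof M).

Lemma phi_prin A (S : cterm A -> Prop) M : Reg S -> (phi S (prin M) <-> S M).
Proof.
move=> [Q [Hs [F HF]]]; rewrite /phi /= (ufof_iff (prin_prof M) Hs HF); by rewrite HF.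
Qed.

Lemma phi_not A (S : cterm A -> Prop) th : Reg S -> (phi S th <-> ~ phi (fun M => ~ S M) th).
Proof.
move=> HR; have HU := ufof_ultra (proj2_sig th).
case: (HU) => [_ [Hseq [_ [HF [Hmeet [_ Hcomp]]]]]].
split.
- move=> H1 H2; have [M [a b]] := uf_ne HU (Hmeet _ _ H1 H2); exact: b a.
- move=> H; case: (Hcomp _ HR) => // H'; by case: H.
Qed.

Lemma main_iso A : reg_clopen_iso (@phi A).
Proof.
split.
  move=> S HR; split; first exact: open_phi.
  refine (gen_open_ext _ (@open_phi A (fun M => ~ S M))) => th.
  rewrite (phi_not th HR); split; [move=> H H'; exact: H' H|tauto].
split.
  move=> S S' HR HR' E th; have HU := ufof_ultra (proj2_sig th).
  case: (HU) => [_ [Hseq _]]; split => H.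
  - exact: (Hseq _ _ H E).
  - by apply: (Hseq _ _ H) => M; rewrite E.
split.
  move=> S S' HR HR' E M; rewrite -(phi_prin M HR) -(phi_prin M HR'); exact: E.
split.
  move=> C HC; have [m Hm] := clopen_det HC.
  pose F (d : sem (Qm m) A) := exists th : profinite A, proj1_sig th (Qm m) = d /\ C th.
  have HF M : C (prin M) <-> F (csem (Qm m) M).
    split; first by move=> c; exists (prin M).
    move=> [th [E c]]; exact: (Hm th (prin M) E c).
  have Hs : saturated (fun M => C (prin M)).
    move=> M N c; have -> // : prin M = prin N.
    apply: sig_eq => /=; apply: functional_extensionality_dep => Q; exact: csem_conv.
  exists (fun M => C (prin M)); split; first by exists (Qm m); split => //; exists F.
  move=> th; rewrite /phi (ufof_iff (proj2_sig th) Hs HF); split.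
  + move=> [th' [E c]]; exact: Hm th' th E c.
  + move=> c; by exists th.
split.
  move=> S S' HR HR' th; have HU := ufof_ultra (proj2_sig th).
  case: (HU) => [_ [_ [_ [_ [Hmeet [Hup _]]]]]]; split.
  - move=> H; split.
    + apply: (Hup _ _ H HR) => M [] //.
    + apply: (Hup _ _ H HR') => M [] //.
  - move=> [H H']; exact: Hmeet.
split.
  move=> S S' HR HR' th; have HU := ufof_ultra (proj2_sig th).
  case: (HU) => [_ [_ [_ [HF [Hmeet [Hup Hcomp]]]]]]; split.
  - move=> H; apply: NNPP => Hn.
    have H1 : phi (fun M => ~ S M) th by case: (Hcomp _ HR) => // h; case: Hn; left.
    have H2 : phi (fun M => ~ S' M) th by case: (Hcomp _ HR') => // h; case: Hn; right.
    have [M [[a|b] [c d]]] := uf_ne HU (Hmeet _ _ H (Hmeet _ _ H1 H2)); by [apply: c|apply: d].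
  - move=> [H|H].
    + apply: (Hup _ _ H (Reg_or HR HR')) => M; by left.
    + apply: (Hup _ _ H (Reg_or HR HR')) => M; by right.
split.
  move=> S HR th; rewrite (phi_not th HR); split; first by move=> H H'; exact: H' H.
  move=> H; exact: NNPP H.
split.
  move=> th; split => // _; have HU := ufof_ultra (proj2_sig th); by case: HU => [_ [_ [HT _]]].
move=> th; split => //; have HU := ufof_ultra (proj2_sig th); by case: HU => [_ [_ [_ [HF _]]]].
Qed.

Theorem mainTheorem7 (A : ty) :
  homeomorphic (@prof_basis A) (@stone_basis A) /\
  exists phi : (cterm A -> Prop) -> (profinite A -> Prop), reg_clopen_iso phi.
Proof. split; [exact: homeo | exists (@phi A); exact: main_iso]. Qed.
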